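(* Let $n,m\ge 1$, let $A_1,\ldots,A_m$ be real symmetric $n\times n$ matrices and $a_1,\ldots,a_m\in\mathbb{R}^n$, and define $f:\mathbb{R}^n\to\mathbb{R}^m$ by $f(x)=(f_1(x),\ldots,f_m(x))$ with $f_i(x)=\frac12 x^TA_ix+a_i^Tx$. Let $A=[a_1~\ldots~a_m]\in\mathbb{R}^{n\times m}$ and set $$L:=\sqrt{\sum_{i=1}^m\|A_i\|^2},\qquad L_{\rm new}:=\sqrt{\lambda_{\max}\Big(\sum_{i=1}^mA_i^TA_i\Big)},\qquad \nu:=\sigma_{\min}(A)=\sqrt{\lambda_{\min}(A^TA)},$$ where $\|A_i\|=\sqrt{\lambda_{\max}(A_i^TA_i)}$ is the spectral norm. Assume $L_{\rm new}>0$. Then $L_{\rm new}\le L$, and for every $\epsilon<\epsilon^*_{\rm new}:=\nu/(2L_{\rm new})$ the set $$F_m(\epsilon)=\{f(x):~x\in\mathbb{R}^n,~\|x\|\le\epsilon\}$$ is a convex subset of $\mathbb{R}^m$.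
   Context: $\|\cdot\|$ on vectors is the Euclidean norm. $\lambda_{\max},\lambda_{\min}$ denote the largest and smallest eigenvalue of a symmetric matrix, and $\sigma_{\min}(A)$ denotes the smallest singular value of $A$, defined as $\sqrt{\lambda_{\min}(A^TA)}$. *)

(* Defs.v *)
From HB Require Import structures.
From mathcomp Require Import all_boot all_order all_algebra.
From mathcomp Require Import all_classical all_reals all_analysis.
Set Implicit Arguments. Unset Strict Implicit. Unset Printing Implicit Defensive.
Import Order.TTheory GRing.Theory Num.Theory.
Local Open Scope ring_scope.
Local Open Scope classical_set_scope.

(* For a real symmetric matrix
   the (real) eigenvalues form a finite nonempty set; lambda_max / lambda_min
   are its largest / smallest element, taken as sup / inf over the reals. *)
Definition lambda_max (R : realType) (n : nat) (M : 'M[R]_n) : R :=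
  sup [set a : R | eigenvalue M a].
Definition lambda_min (R : realType) (n : nat) (M : 'M[R]_n) : R :=
  inf [set a : R | eigenvalue M a].

Definition enorm (R : realType) (n : nat) (x : 'cV[R]_n) : R :=
  Num.sqrt (\sum_(i < n) x i 0 ^+ 2).

Definition spec_norm (R : realType) (n : nat) (B : 'M[R]_n) : R :=
  Num.sqrt (lambda_max (B^T *m B)).

Definition sigma_min (R : realType) (n m : nat) (A : 'M[R]_(n, m)) : R :=
  Num.sqrt (lambda_min (A^T *m A)).

Definition quadmap (R : realType) (n m : nat) (As : 'I_m -> 'M[R]_n)
  (A : 'M[R]_(n, m)) (x : 'cV[R]_n) : 'cV[R]_m :=
  \col_(i < m) (2^-1 * (x^T *m As i *m x) 0 0 + ((col i A)^T *m x) 0 0).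

Definition Fset (R : realType) (n m : nat) (As : 'I_m -> 'M[R]_n)
  (A : 'M[R]_(n, m)) (eps : R) : set 'cV[R]_m :=
  [set quadmap As A x | x in [set x : 'cV[R]_n | enorm x <= eps]].

(* Main.v *)
Require Import Defs.
From HB Require Import structures.
From mathcomp Require Import all_boot all_order all_algebra.
From mathcomp Require Import all_classical all_reals all_analysis.
From mathcomp Require Import ring lra.
Import Order.TTheory GRing.Theory Num.Theory.
Import numFieldTopology.Exports numFieldNormedType.Exports.
Local Open Scope ring_scope.
Local Open Scope classical_set_scope.

Definition dot {R : realType} {k : nat} (u v : 'cV[R]_k) : R := (u^T *m v) 0 0.
Definition nrm {R : realType} {k : nat} (u : 'cV[R]_k) : R := Num.sqrt (dot u u).

Lemma dotE {R : realType} {k} (u v : 'cV[R]_k) : dot u v = \sum_i u i 0 * v i 0.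
Proof. by rewrite /dot mxE; apply: eq_bigr => i _; rewrite mxE. Qed.

Lemma dotC {R : realType} {k} (u v : 'cV[R]_k) : dot u v = dot v u.
Proof. by rewrite !dotE; apply: eq_bigr => i _; rewrite mulrC. Qed.

Lemma dotDl {R : realType} {k} (u v w : 'cV[R]_k) : dot (u + v) w = dot u w + dot v w.
Proof. by rewrite !dotE -big_split; apply: eq_bigr => i _; rewrite mxE mulrDl. Qed.

Lemma dotDr {R : realType} {k} (u v w : 'cV[R]_k) : dot w (u + v) = dot w u + dot w v.
Proof. by rewrite dotC dotDl !(dotC w). Qed.

Lemma dotZl {R : realType} {k} (a : R) (u v : 'cV[R]_k) : dot (a *: u) v = a * dot u v.
Proof. by rewrite !dotE mulr_sumr; apply: eq_bigr => i _; rewrite mxE mulrA. Qed.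

Lemma dotZr {R : realType} {k} (a : R) (u v : 'cV[R]_k) : dot v (a *: u) = a * dot v u.
Proof. by rewrite dotC dotZl dotC. Qed.

Lemma dotNl {R : realType} {k} (u v : 'cV[R]_k) : dot (- u) v = - dot u v.
Proof. by rewrite -scaleN1r dotZl mulN1r. Qed.

Lemma dotNr {R : realType} {k} (u v : 'cV[R]_k) : dot v (- u) = - dot v u.
Proof. by rewrite dotC dotNl dotC. Qed.

Lemma dotBl {R : realType} {k} (u v w : 'cV[R]_k) : dot (u - v) w = dot u w - dot v w.
Proof. by rewrite dotDl dotNl. Qed.

Lemma dotBr {R : realType} {k} (u v w : 'cV[R]_k) : dot w (u - v) = dot w u - dot w v.
Proof. by rewrite dotDr dotNr. Qed.

Lemma dot0l {R : realType} {k} (u : 'cV[R]_k) : dot 0 u = 0.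
Proof. by rewrite dotE big1 // => i _; rewrite mxE mul0r. Qed.

Lemma dot0r {R : realType} {k} (u : 'cV[R]_k) : dot u 0 = 0.
Proof. by rewrite dotC dot0l. Qed.

Lemma dot_ge0 {R : realType} {k} (u : 'cV[R]_k) : 0 <= dot u u.
Proof. by rewrite dotE sumr_ge0 // => i _; rewrite -expr2 sqr_ge0. Qed.

Lemma dot_eq0 {R : realType} {k} (u : 'cV[R]_k) : dot u u = 0 -> u = 0.
Proof.
rewrite dotE => /eqP; rewrite psumr_eq0 => [/allP H|i _]; last by rewrite -expr2 sqr_ge0.
apply/matrixP => i j; rewrite ord1 mxE.
have /H : i \in index_enum 'I_k by rewrite mem_index_enum.
by rewrite /= -expr2 sqrf_eq0 => /eqP.
Qed.

Lemma dot_gt0 {R : realType} {k} (u : 'cV[R]_k) : u != 0 -> 0 < dot u u.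
Proof.
move=> u0; rewrite lt_neqAle dot_ge0 andbT eq_sym; apply/negP => /eqP /dot_eq0 h.
by rewrite h eqxx in u0.
Qed.

Lemma dot_mul {R : realType} {k p} (M : 'M[R]_(p,k)) (u : 'cV[R]_p) (v : 'cV[R]_k) :
  dot u (M *m v) = dot (M^T *m u) v.
Proof. by rewrite /dot trmx_mul trmxK mulmxA. Qed.

Lemma nrm_ge0 {R : realType} {k} (u : 'cV[R]_k) : 0 <= nrm u.
Proof. exact: sqrtr_ge0. Qed.

Lemma nrm_sq {R : realType} {k} (u : 'cV[R]_k) : nrm u ^+ 2 = dot u u.
Proof. by rewrite sqr_sqrtr // dot_ge0. Qed.

Lemma enormE {R : realType} {k} (u : 'cV[R]_k) : enorm u = nrm u.
Proof. by rewrite /enorm /nrm dotE; congr Num.sqrt; apply: eq_bigr => i _; rewrite expr2. Qed.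

Lemma CS {R : realType} {k} (u v : 'cV[R]_k) : dot u v ^+ 2 <= dot u u * dot v v.
Proof.
have [->|v0] := eqVneq v 0; first by rewrite !dot0r expr0n /= mulr0.
have hv := dot_gt0 v v0.
set t := dot u v / dot v v.
have := dot_ge0 (u - t *: v).
rewrite !dotBl !dotBr !dotZl !dotZr (dotC v u) /t => h.
have e : dot u v / dot v v * (dot u v / dot v v * dot v v) = dot u v ^+ 2 / dot v v.
  by field; rewrite gt_eqF.
have e2 : dot u v / dot v v * dot u v = dot u v ^+ 2 / dot v v.
  by field; rewrite gt_eqF.
rewrite e e2 in h.
have : dot u v ^+ 2 / dot v v <= dot u u by lra.
by rewrite ler_pdivrMr.
Qed.

Lemma CSn {R : realType} {k} (u v : 'cV[R]_k) : `|dot u v| <= nrm u * nrm v.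
Proof.
rewrite -ler_sqr ?nnegrE ?mulr_ge0 ?nrm_ge0 //.
by rewrite exprMn !nrm_sq real_normK ?num_real // CS.
Qed.

Lemma dot_le_nrm {R : realType} {k} (u v : 'cV[R]_k) : dot u v <= nrm u * nrm v.
Proof. exact: le_trans (ler_norm _) (CSn u v). Qed.

Lemma nrm_triangle {R : realType} {k} (u v : 'cV[R]_k) : nrm (u + v) <= nrm u + nrm v.
Proof.
rewrite -ler_sqr ?nnegrE ?addr_ge0 ?nrm_ge0 //.
rewrite nrm_sq sqrrD !nrm_sq dotDl !dotDr (dotC v u).
have := dot_le_nrm u v; lra.
Qed.

Lemma nrm_le_sq {R : realType} {k} (u : 'cV[R]_k) (b : R) : 0 <= b -> dot u u <= b ^+ 2 -> nrm u <= b.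
Proof. by move=> b0 h; rewrite -ler_sqr ?nnegrE ?nrm_ge0 // nrm_sq. Qed.

Lemma nrmZ {R : realType} {k} (a : R) (u : 'cV[R]_k) : nrm (a *: u) = `|a| * nrm u.
Proof. by rewrite /nrm dotZl dotZr mulrA -expr2 sqrtrM ?sqr_ge0 // sqrtr_sqr. Qed.

Lemma nrmN {R : realType} {k} (u : 'cV[R]_k) : nrm (- u) = nrm u.
Proof. by rewrite /nrm dotNl dotNr opprK. Qed.

Lemma nrm0 {R : realType} {k} : nrm (0 : 'cV[R]_k) = 0.
Proof. by rewrite /nrm dot0l sqrtr0. Qed.

Lemma coord_le_nrm {R : realType} {k} (u : 'cV[R]_k) i : `|u i 0| <= nrm u.
Proof.
rewrite -ler_sqr ?nnegrE ?nrm_ge0 // nrm_sq real_normK ?num_real // dotE.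
rewrite (bigD1 i) //= -expr2 lerDl sumr_ge0 // => j _; rewrite -expr2 sqr_ge0.
by [].
Qed.


Definition ccont {R : realType} {k : nat} (h : 'cV[R]_k -> R) :=
  continuous (fun u : 'rV[R]_k => h u^T).

Lemma ccont_ext {R : realType} {k} (h1 h2 : 'cV[R]_k -> R) :
  (forall x, h1 x = h2 x) -> ccont h1 -> ccont h2.
Proof.
move=> e; rewrite /ccont.
by have -> : (fun u : 'rV[R]_k => h2 u^T) = (fun u => h1 u^T) by apply: funext => u; rewrite e.
Qed.

Lemma ccont_coord {R : realType} {k} i : ccont (fun x : 'cV[R]_k => x i 0).
Proof.
rewrite /ccont.
have -> : (fun u : 'rV[R]_k => u^T i 0) = (fun u => u 0 i) by apply: funext => u; rewrite mxE.
exact: coord_continuous.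
Qed.

Lemma ccont_cst {R : realType} {k} (c : R) : ccont (fun x : 'cV[R]_k => c).
Proof. exact: cst_continuous. Qed.

Lemma ccont_add {R : realType} {k} (f g : 'cV[R]_k -> R) :
  ccont f -> ccont g -> ccont (fun x => f x + g x).
Proof. by move=> hf hg u; apply: continuousD; [exact: hf|exact: hg]. Qed.

Lemma ccont_mul {R : realType} {k} (f g : 'cV[R]_k -> R) :
  ccont f -> ccont g -> ccont (fun x => f x * g x).
Proof. by move=> hf hg u; apply: continuousM; [exact: hf|exact: hg]. Qed.

Lemma ccont_opp {R : realType} {k} (f : 'cV[R]_k -> R) :
  ccont f -> ccont (fun x => - f x).
Proof. by move=> hf u; apply: continuousN; exact: hf. Qed.

Lemma ccont_sub {R : realType} {k} (f g : 'cV[R]_k -> R) :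
  ccont f -> ccont g -> ccont (fun x => f x - g x).
Proof. by move=> hf hg; apply: ccont_add => //; exact: ccont_opp. Qed.

Lemma ccont_sqrt {R : realType} {k} (f : 'cV[R]_k -> R) :
  ccont f -> ccont (fun x => Num.sqrt (f x)).
Proof.
move=> hf u; apply: (continuous_comp (f := fun u : 'rV[R]_k => f u^T)); first exact: hf.
exact: sqrt_continuous.
Qed.

Lemma ccont_sum {R : realType} {k p} (f : 'I_p -> 'cV[R]_k -> R) :
  (forall i, ccont (f i)) -> ccont (fun x => \sum_i f i x).
Proof.
move=> hf; rewrite /ccont.
apply: (@continuous_big _ _ +%R 0 xpredT add_continuous _ (index_enum 'I_p) (fun i (u : 'rV[R]_k) => f i u^T)).
by move=> i _; exact: hf.
Qed.

Definition vcont {R : realType} {k p : nat} (F : 'cV[R]_k -> 'cV[R]_p) :=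
  forall i, ccont (fun x => F x i 0).

Lemma vcont_id {R : realType} {k} : vcont (fun x : 'cV[R]_k => x).
Proof. by move=> i; exact: ccont_coord. Qed.

Lemma vcont_cst {R : realType} {k p} (c : 'cV[R]_p) : vcont (fun x : 'cV[R]_k => c).
Proof. by move=> i; exact: ccont_cst. Qed.

Lemma vcont_add {R : realType} {k p} (F G : 'cV[R]_k -> 'cV[R]_p) :
  vcont F -> vcont G -> vcont (fun x => F x + G x).
Proof.
move=> hF hG i; apply: (@ccont_ext _ _ (fun x => F x i 0 + G x i 0)).
  by move=> x; rewrite mxE.
exact: ccont_add.
Qed.

Lemma vcont_opp {R : realType} {k p} (F : 'cV[R]_k -> 'cV[R]_p) :
  vcont F -> vcont (fun x => - F x).
Proof.
move=> hF i; apply: (@ccont_ext _ _ (fun x => - F x i 0)).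
  by move=> x; rewrite mxE.
exact: ccont_opp.
Qed.

Lemma vcont_sub {R : realType} {k p} (F G : 'cV[R]_k -> 'cV[R]_p) :
  vcont F -> vcont G -> vcont (fun x => F x - G x).
Proof. by move=> hF hG; apply: vcont_add => //; exact: vcont_opp. Qed.

Lemma vcont_mul {R : realType} {k p q} (M : 'M[R]_(q, p)) (F : 'cV[R]_k -> 'cV[R]_p) :
  vcont F -> vcont (fun x => M *m F x).
Proof.
move=> hF i; apply: (@ccont_ext _ _ (fun x => \sum_j M i j * F x j 0)).
  by move=> x; rewrite mxE.
by apply: ccont_sum => j; apply: ccont_mul; [exact: ccont_cst|exact: hF].
Qed.

Lemma vcont_col {R : realType} {k p} (h : 'I_p -> 'cV[R]_k -> R) :
  (forall i, ccont (h i)) -> vcont (fun x => \col_i h i x).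
Proof.
move=> hh i; apply: (@ccont_ext _ _ (h i)); first by move=> x; rewrite mxE.
exact: hh.
Qed.

Lemma ccont_dot {R : realType} {k p} (F G : 'cV[R]_k -> 'cV[R]_p) :
  vcont F -> vcont G -> ccont (fun x => dot (F x) (G x)).
Proof.
move=> hF hG; apply: (@ccont_ext _ _ (fun x => \sum_i F x i 0 * G x i 0)).
  by move=> x; rewrite dotE.
by apply: ccont_sum => i; apply: ccont_mul; [exact: hF|exact: hG].
Qed.

Lemma ccont_nrm {R : realType} {k p} (F : 'cV[R]_k -> 'cV[R]_p) :
  vcont F -> ccont (fun x => nrm (F x)).
Proof. by move=> hF; apply: ccont_sqrt; exact: ccont_dot. Qed.

Lemma col_EVT_min {R : realType} {k} (g h : 'cV[R]_k -> R) (B : R) :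
  ccont g -> ccont h -> (exists x0, h x0 <= 0) ->
  (forall x, h x <= 0 -> nrm x <= B) ->
  exists x, h x <= 0 /\ forall y, h y <= 0 -> g x <= g y.
Proof.
move=> cg ch [x0 hx0] hB.
pose S := [set u : 'rV[R]_k | h u^T <= 0].
have S0 : S !=set0 by exists x0^T; rewrite /S /= trmxK.
have cS : compact S.
  apply: bounded_closed_compact.
    exists B; split; first by rewrite num_real.
    move=> M BM u Su /=; rewrite /Num.Def.normr /= mx_normrE.
    apply: bigmax_le; first by apply: le_trans (nrm_ge0 u^T) _; exact: le_trans (hB _ Su) (ltW BM).
    move=> [i j] _ /=; rewrite ord1.
    apply: le_trans (ltW BM); apply: le_trans (hB _ Su).
    by have := coord_le_nrm u^T j; rewrite mxE.
  apply: (preimage_closed (f := fun u : 'rV[R]_k => h u^T) (D := [set r : R | r <= 0])).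
    by move=> u _; exact: ch.
  exact: closed_le.
have [c Sc hc] := EVT_min_rV S0 cS (continuous_subspaceT cg).
exists c^T; split; first by move: Sc; rewrite inE.
move=> y hy; have := hc y^T; rewrite trmxK; apply.
by rewrite inE /S /= trmxK.
Qed.


Lemma dot_sym {R : realType} {k} (S : 'M[R]_k) (x y : 'cV[R]_k) :
  S^T = S -> dot x (S *m y) = dot y (S *m x).
Proof. by move=> hS; rewrite dot_mul hS dotC. Qed.

Lemma quad_add {R : realType} {k} (S : 'M[R]_k) (x y : 'cV[R]_k) :
  S^T = S -> dot (x + y) (S *m (x + y)) =
   dot x (S *m x) + 2 * dot y (S *m x) + dot y (S *m y).
Proof.
move=> hS; rewrite mulmxDr !dotDl !dotDr (dot_sym _ x y hS); ring.
Qed.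

Lemma nrm_eq0 {R : realType} {k} (u : 'cV[R]_k) : nrm u = 0 -> u = 0.
Proof.
move=> h; apply: dot_eq0; by rewrite -nrm_sq h expr0n.
Qed.

Lemma nrm_gt0 {R : realType} {k} (u : 'cV[R]_k) : u != 0 -> 0 < nrm u.
Proof. by move=> u0; rewrite sqrtr_gt0 dot_gt0. Qed.

Lemma unit_decomp {R : realType} {k} (x : 'cV[R]_k) : x != 0 ->
  x = nrm x *: ((nrm x)^-1 *: x) /\ dot ((nrm x)^-1 *: x) ((nrm x)^-1 *: x) = 1.
Proof.
move=> x0; have hn := nrm_gt0 x x0; split.
  by rewrite scalerA divff ?gt_eqF // scale1r.
rewrite dotZl dotZr -nrm_sq; field; rewrite gt_eqF //.
Qed.

Lemma psd_kernel {R : realType} {k} (S : 'M[R]_k) (v : 'cV[R]_k) :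
  S^T = S -> (forall x, 0 <= dot x (S *m x)) -> dot v (S *m v) = 0 -> S *m v = 0.
Proof.
move=> hS hpsd hv.
set w := S *m v.
have ha : dot w (S *m v) = dot w w by [].
set a := dot w w; set b := dot w (S *m w).
have hb : 0 <= b := hpsd w.
have ha0 : 0 <= a := dot_ge0 w.
pose t := - a / (b + 1).
have := hpsd (v + t *: w).
rewrite quad_add // hv dotZl ha.
rewrite -/w linearZ /= dotZl dotZr -/b => h.
have : a = 0.
  have hb1 : 0 < b + 1 by lra.
  have e : t * a = - a ^+ 2 / (b + 1) by rewrite /t; field; rewrite gt_eqF.
  have e2 : t * (t * b) = a ^+ 2 * b / (b + 1) ^+ 2 by rewrite /t; field; rewrite gt_eqF.
  rewrite -/a -/b e in h.
  rewrite e2 in h.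
  have h2 : 0 <= a ^+ 2 * (b - 2 * (b + 1)).
    have : 0 <= (0 + 2 * (- a ^+ 2 / (b + 1)) + a ^+ 2 * b / (b + 1) ^+ 2) * (b + 1) ^+ 2.
      by apply: mulr_ge0 => //; rewrite sqr_ge0.
    have -> : (0 + 2 * (- a ^+ 2 / (b + 1)) + a ^+ 2 * b / (b + 1) ^+ 2) * (b + 1) ^+ 2
       = a ^+ 2 * (b - 2 * (b + 1)) by field; rewrite gt_eqF.
    by [].
  have : a ^+ 2 <= 0 by nra.
  by move=> h3; apply/eqP; rewrite -sqrf_eq0 eq_le h3 sqr_ge0.
by move/dot_eq0.
Qed.

Lemma rayleigh_max {R : realType} {k} (M : 'M[R]_k) : (0 < k)%N -> M^T = M ->
  exists c, [/\ lambda_max M = c, exists2 x : 'cV[R]_k, x != 0 & M *m x = c *: x &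
     forall x : 'cV[R]_k, dot x (M *m x) <= c * dot x x].
Proof.
move=> hk hM.
pose g := fun x : 'cV[R]_k => - dot x (M *m x).
pose h := fun x : 'cV[R]_k => (dot x x - 1) ^+ 2.
have cg : ccont g by apply: ccont_opp; apply: ccont_dot; [exact: vcont_id| apply: vcont_mul; exact: vcont_id].
have ch : ccont h.
  rewrite /h; apply: (@ccont_ext _ _ (fun x => (dot x x - 1) * (dot x x - 1))).
    by move=> x; rewrite expr2.
  by apply: ccont_mul; apply: ccont_sub; try exact: ccont_cst; apply: ccont_dot; exact: vcont_id.
have hunit x : h x <= 0 -> dot x x = 1.
  rewrite /h => hx; have : (dot x x - 1) ^+ 2 = 0 by apply/eqP; rewrite eq_le hx sqr_ge0.
  by move/eqP; rewrite sqrf_eq0 subr_eq0 => /eqP.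
have [x0 hx0] : exists x0, h x0 <= 0.
  pose e : 'cV[R]_k := const_mx 1.
  have e0 : e != 0.
    apply/negP => /eqP /matrixP /(_ (Ordinal hk) 0); rewrite !mxE => /eqP.
    by rewrite oner_eq0.
  exists ((nrm e)^-1 *: e); rewrite /h (unit_decomp e e0).2 subrr expr0n.
  by [].
have hB x : h x <= 0 -> nrm x <= 1.
  by move=> hx; apply: nrm_le_sq; [exact: ler01| rewrite hunit // expr1n].
have [v [hv hmin]] := col_EVT_min g h 1 cg ch (ex_intro _ x0 hx0) hB.
have vv := hunit _ hv.
set c := dot v (M *m v).
have hub x : dot x x = 1 -> dot x (M *m x) <= c.
  move=> hx; have := hmin x; rewrite /h hx subrr expr0n lexx => /(_ isT).
  by rewrite /g lerN2.
have hall x : dot x (M *m x) <= c * dot x x.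
  have [->|x0'] := eqVneq x 0; first by rewrite !dot0l mulr0.
  have [ex eu] := unit_decomp x x0'.
  pose u := (nrm x)^-1 *: x.
  have ex' : x = nrm x *: u by exact: ex.
  have eu' : dot u u = 1 by exact: eu.
  have e1 : dot (nrm x *: u) (M *m (nrm x *: u)) = nrm x ^+ 2 * dot u (M *m u).
    by rewrite -scalemxAr dotZl dotZr expr2 mulrA.
  rewrite -ex' in e1.
  rewrite e1 -nrm_sq; have := hub _ eu'; have := sqr_ge0 (nrm x); nra.
pose S := c%:M - M.
have hS : S^T = S by rewrite /S linearB /= tr_scalar_mx hM.
have Sx x : S *m x = c *: x - M *m x by rewrite /S mulmxBl mul_scalar_mx.
have hpsd x : 0 <= dot x (S *m x) by rewrite Sx dotBr dotZr subr_ge0 hall.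
have hSv : dot v (S *m v) = 0 by rewrite Sx dotBr dotZr vv mulr1 subrr.
have Mv : M *m v = c *: v.
  by have := psd_kernel S v hS hpsd hSv; rewrite Sx => /eqP; rewrite subr_eq0 => /eqP.
have v0 : v != 0 by apply/negP => /eqP v0; rewrite v0 dot0l in vv; move: vv; apply/eqP; rewrite eq_sym oner_eq0.
exists c; split => //; last by exists v.
have eig a : eigenvalue M a -> a <= c.
  move/eigenvalueP => [u uM u0].
  have xM : M *m u^T = a *: u^T by rewrite -hM -trmx_mul uM linearZ.
  have xx : 0 < dot u^T u^T by rewrite dot_gt0 // trmx_eq0.
  have := hall u^T; rewrite xM dotZr.
  by rewrite ler_pM2r.
have ceig : eigenvalue M c.
  apply/eigenvalueP; exists v^T; last by rewrite trmx_eq0.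
  by rewrite -{1}hM -trmx_mul Mv linearZ.
apply/le_anti/andP; split.
  by apply: ge_sup; [exists c | move=> a; exact: eig].
by apply: sup_upper_bound => //; split; [exists c | exists c => a; exact: eig].
Qed.

Lemma eigenvalueN {R : realType} {k} (M : 'M[R]_k) a :
  eigenvalue (- M) a = eigenvalue M (- a).
Proof.
apply/eigenvalueP/eigenvalueP => [[v hv v0]|[v hv v0]]; exists v => //.
  by rewrite scaleNr -hv mulmxN opprK.
by rewrite mulmxN hv scaleNr opprK.
Qed.

Lemma rayleigh_min {R : realType} {k} (M : 'M[R]_k) : (0 < k)%N -> M^T = M ->
  exists c, lambda_min M = c /\ forall x : 'cV[R]_k, c * dot x x <= dot x (M *m x).
Proof.
move=> hk hM.
have hM' : (- M)^T = - M by rewrite linearN /= hM.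
have [c [hc _ hall]] := rayleigh_max (- M) hk hM'.
exists (- c); split.
  rewrite /lambda_min /inf; congr (- _).
  rewrite -hc /lambda_max; congr sup.
  apply/seteqP; split => a /=.
    by move=> [b hb <-]; rewrite eigenvalueN opprK.
  by move=> ha; exists (- a); rewrite ?opprK // -eigenvalueN.
move=> x; have := hall x; rewrite mulNmx dotNr; lra.
Qed.


Definition JT {R : realType} {n m : nat} (As : 'I_m -> 'M[R]_n) (A : 'M[R]_(n,m))
  (x : 'cV[R]_n) (w : 'cV[R]_m) : 'cV[R]_n := \sum_i w i 0 *: (As i *m x + col i A).
Definition Jh {R : realType} {n m : nat} (As : 'I_m -> 'M[R]_n) (A : 'M[R]_(n,m))
  (x h : 'cV[R]_n) : 'cV[R]_m := \col_i dot (As i *m x + col i A) h.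
Definition qv {R : realType} {n m : nat} (As : 'I_m -> 'M[R]_n)
  (h : 'cV[R]_n) : 'cV[R]_m := \col_i dot h (As i *m h).

Lemma cvD {R : realType} {k} (u v : 'cV[R]_k) i : (u + v) i 0 = u i 0 + v i 0.
Proof. by rewrite mxE. Qed.
Lemma cvZ {R : realType} {k} (a : R) (u : 'cV[R]_k) i : (a *: u) i 0 = a * u i 0.
Proof. by rewrite mxE. Qed.
Lemma cvN {R : realType} {k} (u : 'cV[R]_k) i : (- u) i 0 = - u i 0.
Proof. by rewrite mxE. Qed.
Lemma cvB {R : realType} {k} (u v : 'cV[R]_k) i : (u - v) i 0 = u i 0 - v i 0.
Proof. by rewrite !mxE. Qed.

Lemma qmE {R : realType} {n m} (As : 'I_m -> 'M[R]_n) A (x : 'cV[R]_n) i :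
  quadmap As A x i 0 = 2^-1 * dot x (As i *m x) + dot (col i A) x.
Proof. by rewrite mxE /dot mulmxA. Qed.

Lemma JhE {R : realType} {n m} (As : 'I_m -> 'M[R]_n) A (x h : 'cV[R]_n) i :
  Jh As A x h i 0 = dot (As i *m x + col i A) h.
Proof. by rewrite mxE. Qed.

Lemma qvE {R : realType} {n m} (As : 'I_m -> 'M[R]_n) (h : 'cV[R]_n) i :
  qv As h i 0 = dot h (As i *m h).
Proof. by rewrite mxE. Qed.

Lemma qm_expand {R : realType} {n m} (As : 'I_m -> 'M[R]_n) A (x h : 'cV[R]_n) :
  (forall i, (As i)^T = As i) ->
  quadmap As A (x + h) = quadmap As A x + Jh As A x h + 2^-1 *: qv As h.
Proof.
move=> hS; apply/matrixP => i j; rewrite ord1 qmE !cvD cvZ qmE JhE qvE.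
rewrite quad_add // dotDr dotDl (dotC (As i *m x) h); by field.
Qed.

Lemma JhZ {R : realType} {n m} (As : 'I_m -> 'M[R]_n) A (x h : 'cV[R]_n) (a : R) :
  Jh As A x (a *: h) = a *: Jh As A x h.
Proof. by apply/matrixP => i j; rewrite ord1 JhE cvZ JhE dotZr. Qed.

Lemma qvZ {R : realType} {n m} (As : 'I_m -> 'M[R]_n) (h : 'cV[R]_n) (a : R) :
  qv As (a *: h) = a ^+ 2 *: qv As h.
Proof.
apply/matrixP => i j; rewrite ord1 qvE cvZ qvE -scalemxAr dotZl dotZr; ring.
Qed.

Lemma dot_suml {R : realType} {k p} (F : 'I_p -> 'cV[R]_k) g :
  dot (\sum_i F i) g = \sum_i dot (F i) g.
Proof. exact: (big_morph (fun u => dot u g) (fun u v => dotDl u v g) (dot0l g)). Qed.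

Lemma dot_JT {R : realType} {n m} (As : 'I_m -> 'M[R]_n) A (x g : 'cV[R]_n) (e : 'cV[R]_m) :
  dot e (Jh As A x g) = dot (JT As A x e) g.
Proof.
rewrite /JT dot_suml dotE; apply: eq_bigr => i _; by rewrite JhE dotZl.
Qed.

Lemma vcont_qm {R : realType} {n m} (As : 'I_m -> 'M[R]_n) A :
  vcont (quadmap As A).
Proof.
move=> i; apply: (@ccont_ext _ _ (fun x => 2^-1 * dot x (As i *m x) + dot (col i A) x)).
  by move=> x; rewrite qmE.
apply: ccont_add.
  apply: ccont_mul; first exact: ccont_cst.
  by apply: ccont_dot; [exact: vcont_id|apply: vcont_mul; exact: vcont_id].
  apply: (@ccont_ext _ _ (fun x => \sum_j (col i A) j 0 * x j 0)).
    by move=> x; rewrite dotE.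
  by apply: ccont_sum => j; apply: ccont_mul; [exact: ccont_cst| exact: ccont_coord].
Qed.

Lemma dot_subZ {R : realType} {k} (e u : 'cV[R]_k) (t : R) :
  dot (e - t *: u) (e - t *: u) = dot e e - 2 * t * dot e u + t ^+ 2 * dot u u.
Proof. rewrite dotBl !dotBr !dotZl !dotZr (dotC u e); ring. Qed.

Lemma min3 {R : realType} (a b c : R) : 0 < a -> 0 < b -> 0 < c ->
  exists t, [/\ 0 < t, t <= a, t <= b & t <= c].
Proof.
move=> a0 b0 c0; exists (Num.min a (Num.min b c)).
by rewrite !lt_min !ge_min a0 b0 c0 !lexx /= ?orbT.
Qed.

Lemma graves {R : realType} {n m} (As : 'I_m -> 'M[R]_n) (A : 'M[R]_(n, m))
  (z : 'cV[R]_n) (y : 'cV[R]_m) (r mu c : R) :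
  (forall i, (As i)^T = As i) -> 0 < c -> c < mu ->
  nrm (quadmap As A z - y) < c * r ->
  (forall x, nrm (x - z) <= r -> forall w, mu * nrm w <= nrm (JT As A x w)) ->
  exists x, nrm (x - z) <= r /\ quadmap As A x = y.
Proof.
move=> hS c0 cmu hz hJ.
have r0 : 0 < r.
  by rewrite -(pmulr_rgt0 _ c0); apply: le_lt_trans hz; exact: nrm_ge0.
pose psi := fun x => nrm (quadmap As A x - y) + c * nrm (x - z).
pose h := fun x => nrm (x - z) - r.
have cpsi : ccont psi.
  apply: ccont_add.
    by apply: ccont_nrm; apply: vcont_sub; [exact: vcont_qm|exact: vcont_cst].
  apply: ccont_mul; first exact: ccont_cst.
  by apply: ccont_nrm; apply: vcont_sub; [exact: vcont_id|exact: vcont_cst].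
have ch : ccont h.
  apply: ccont_sub; last exact: ccont_cst.
  by apply: ccont_nrm; apply: vcont_sub; [exact: vcont_id|exact: vcont_cst].
have hB x : h x <= 0 -> nrm x <= r + nrm z.
  rewrite /h => hx; have := nrm_triangle (x - z) z; rewrite subrK; lra.
have hz0 : h z <= 0 by rewrite /h subrr nrm0; lra.
have [xs [hxs hmin]] := col_EVT_min psi h (r + nrm z) cpsi ch (ex_intro _ z hz0) hB.
have hlt : nrm (xs - z) < r.
  have := hmin z hz0; rewrite /psi subrr nrm0 mulr0 addr0 => h1.
  have h2 := nrm_ge0 (quadmap As A xs - y).
  have : c * nrm (xs - z) < c * r by lra.
  by rewrite ltr_pM2l.
exists xs; split; first by move: hxs; rewrite /h; lra.
apply/eqP; rewrite -subr_eq0; apply/negPn/negP => e0.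
set e := quadmap As A xs - y in e0 hmin.
have E0 := nrm_gt0 e e0; set E := nrm e in E0.
set g := JT As A xs e.
have hG : mu * E <= nrm g := hJ xs (ltW hlt) e.
set G := nrm g in hG.
have mu0 : 0 < mu by lra.
have G0 : 0 < G by apply: lt_le_trans hG; exact: mulr_gt0.
set u := Jh As A xs g.
have eu : dot e u = G ^+ 2 by rewrite /u dot_JT -/g nrm_sq.
set w := 2^-1 *: qv As g.
set W := nrm w.
set H := dot u u.
have H0 : 0 <= H := dot_ge0 u.
have W0 : 0 <= W := nrm_ge0 w.
pose a := G ^+ 2 / E.
pose K := H / E.
have aE : a * E = G ^+ 2 by rewrite /a mulrVK // unitfE gt_eqF.
have KE : K * E = H by rewrite /K mulrVK // unitfE gt_eqF.
have K0 : 0 <= K by rewrite /K divr_ge0 // ltW.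
have a0 : 0 < a by rewrite /a divr_gt0 // exprn_gt0.
have ha : mu * G <= a.
  rewrite -(ler_pM2r E0) aE; have := hG; nra.
have hr : 0 < r - nrm (xs - z) by lra.
have p1 : 0 < E / (2 * a) by rewrite divr_gt0 // mulr_gt0.
have p2 : 0 < (r - nrm (xs - z)) / G by rewrite divr_gt0.
have p3 : 0 < (mu - c) * G / (K + W + 1).
  by rewrite divr_gt0 // ?mulr_gt0 ?subr_gt0 //; lra.
have [t [t0 t1 t2 t3]] := min3 _ _ _ p1 p2 p3.
have t1' : t * (2 * a) <= E by rewrite -ler_pdivlMr // mulr_gt0.
have t2' : t * G <= r - nrm (xs - z) by rewrite -ler_pdivlMr.
have t3' : t * (K + W + 1) <= (mu - c) * G.
  by rewrite -ler_pdivlMr // ltr_wpDl // addr_ge0.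
pose x' := xs + (- t) *: g.
have qx' : quadmap As A x' - y = e - t *: u + t ^+ 2 *: w.
  rewrite /x' qm_expand // JhZ qvZ /e /w /u.
  apply/matrixP => i j; rewrite !mxE; ring.
have n1 : nrm (e - t *: u + t ^+ 2 *: w) <= nrm (e - t *: u) + t ^+ 2 * W.
  apply: le_trans (nrm_triangle _ _) _.
  by rewrite nrmZ ger0_norm // sqr_ge0.
have n2 : nrm (e - t *: u) <= E - t * a + t ^+ 2 * K.
  apply: nrm_le_sq.
    have : 0 <= t ^+ 2 * K by rewrite mulr_ge0 // sqr_ge0.
    lra.
  rewrite dot_subZ eu -/H -nrm_sq -/E -aE -KE.
  have e1 : (E - t * a + t ^+ 2 * K) ^+ 2 - (E ^+ 2 - 2 * t * (a * E) + t ^+ 2 * (K * E))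
     = t ^+ 2 * a ^+ 2 + t ^+ 2 * K * (E - 2 * t * a) + t ^+ 4 * K ^+ 2 by ring.
  rewrite -subr_ge0 e1.
  apply: addr_ge0; first apply: addr_ge0.
  - by rewrite mulr_ge0 // sqr_ge0.
  - apply: mulr_ge0; first by rewrite mulr_ge0 // sqr_ge0.
    nra.
  - by rewrite mulr_ge0 // ?sqr_ge0 // exprn_ge0 // ltW.
have n3 : nrm (x' - z) <= nrm (xs - z) + t * G.
  have -> : x' - z = (xs - z) + (- t) *: g by rewrite /x' addrAC.
  apply: le_trans (nrm_triangle _ _) _.
  by rewrite nrmZ normrN ger0_norm // ltW.
have hx' : h x' <= 0 by rewrite /h; lra.
have := hmin x' hx'; rewrite /psi qx' -/e -/E.
have : c * nrm (x' - z) <= c * (nrm (xs - z) + t * G) by rewrite ler_pM2l.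
move=> h4 h5.
have h6 : t * a <= t * (t * (K + W)) + t * (c * G).
  have := le_trans n1 (lerD n2 (lexx (t ^+ 2 * W))); rewrite expr2. lra.
have h7 : a <= t * (K + W) + c * G.
  by move: h6; rewrite -mulrDr ler_pM2l.
have : (mu - c) * G <= t * (K + W) by nra.
lra.
Qed.


Lemma lmax_props {R : realType} {k} (M : 'M[R]_k) : (0 < k)%N -> M^T = M ->
  (forall x, 0 <= dot x (M *m x)) ->
  0 <= lambda_max M /\ forall x, dot x (M *m x) <= lambda_max M * dot x x.
Proof.
move=> hk hM hpsd; have [c [-> [v v0 Mv] hall]] := rayleigh_max M hk hM.
split => //.
have := hpsd v; rewrite Mv dotZr => h.
by rewrite -(pmulr_lge0 _ (dot_gt0 v v0)).
Qed.

Lemma gram_sym {R : realType} {p k} (B : 'M[R]_(p, k)) : (B^T *m B)^T = B^T *m B.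
Proof. by rewrite trmx_mul trmxK. Qed.

Lemma gram_dot {R : realType} {p k} (B : 'M[R]_(p, k)) (x : 'cV[R]_k) :
  dot x ((B^T *m B) *m x) = dot (B *m x) (B *m x).
Proof. by rewrite -mulmxA dot_mul trmxK. Qed.

Lemma dot_sumr {R : realType} {k p} (F : 'I_p -> 'cV[R]_k) g :
  dot g (\sum_i F i) = \sum_i dot g (F i).
Proof. by rewrite dotC dot_suml; apply: eq_bigr => i _; rewrite dotC. Qed.

Lemma sumM_dot {R : realType} {n m} (As : 'I_m -> 'M[R]_n) (x : 'cV[R]_n) :
  dot x ((\sum_i (As i)^T *m As i) *m x) = \sum_i dot (As i *m x) (As i *m x).
Proof.
rewrite mulmx_suml dot_sumr; apply: eq_bigr => i _; exact: gram_dot.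
Qed.

Lemma sumM_sym {R : realType} {n m} (As : 'I_m -> 'M[R]_n) :
  (\sum_i (As i)^T *m As i)^T = \sum_i (As i)^T *m As i.
Proof. by rewrite linear_sum; apply: eq_bigr => i _; exact: gram_sym. Qed.

Lemma real_CS {R : realType} {p} (a b : 'I_p -> R) :
  (\sum_i a i * b i) ^+ 2 <= (\sum_i a i ^+ 2) * (\sum_i b i ^+ 2).
Proof.
have := CS (\col_i a i) (\col_i b i); rewrite !dotE.
have e1 : \sum_i (\col_i a i) i 0 * (\col_i b i) i 0 = \sum_i a i * b i.
  by apply: eq_bigr => i _; rewrite !mxE.
have e2 (c : 'I_p -> R) : \sum_i (\col_i c i) i 0 * (\col_i c i) i 0 = \sum_i c i ^+ 2.
  by apply: eq_bigr => i _; rewrite !mxE expr2.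
by rewrite e1 !e2.
Qed.

Lemma sum_CS {R : realType} {k p} (w : 'cV[R]_p) (v : 'I_p -> 'cV[R]_k) :
  nrm (\sum_i w i 0 *: v i) <= nrm w * Num.sqrt (\sum_i dot (v i) (v i)).
Proof.
rewrite -sqrtrM ?dot_ge0 //; apply: ler_wsqrtr.
rewrite dotE.
have e (j : 'I_k) : (\sum_i w i 0 *: v i) j 0 = \sum_i w i 0 * v i j 0.
  by rewrite summxE; apply: eq_bigr => i _; rewrite mxE.
under eq_bigr do rewrite e -expr2.
apply: le_trans (ler_sum _ (fun j _ => real_CS (fun i => w i 0) (fun i => v i j 0))) _.
rewrite le_eqVlt; apply/orP; left; apply/eqP.
rewrite -mulr_sumr (exchange_big _ _ _ _ _ (fun j i => v i j 0 ^+ 2)) /= dotE.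
congr (_ * _).
by apply: eq_bigr => i _; rewrite dotE; apply: eq_bigr => j _; rewrite expr2.
Qed.

Lemma sum_col {R : realType} {n m} (A : 'M[R]_(n, m)) (w : 'cV[R]_m) :
  \sum_i w i 0 *: col i A = A *m w.
Proof.
apply/matrixP => j k; rewrite ord1 summxE !mxE; apply: eq_bigr => i _.
by rewrite !mxE mulrC.
Qed.

Lemma JT_split {R : realType} {n m} (As : 'I_m -> 'M[R]_n) A x w :
  JT As A x w = \sum_i w i 0 *: (As i *m x) + A *m w.
Proof.
rewrite /JT -sum_col -big_split /=; apply: eq_bigr => i _; exact: scalerDr.
Qed.

Lemma nu_bound {R : realType} {n m} (A : 'M[R]_(n, m)) (w : 'cV[R]_m) :
  (0 < m)%N -> sigma_min A * nrm w <= nrm (A *m w).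
Proof.
move=> hm; have [c1 [hc hall]] := rayleigh_min (A^T *m A) hm (gram_sym A).
rewrite /sigma_min hc.
have [c0|c0] := leP 0 c1; last first.
  by rewrite ltr0_sqrtr // mul0r nrm_ge0.
rewrite -ler_sqr ?nnegrE ?mulr_ge0 ?sqrtr_ge0 ?nrm_ge0 //.
rewrite exprMn sqr_sqrtr // !nrm_sq -gram_dot; exact: hall.
Qed.

Lemma JT_bound {R : realType} {n m} (As : 'I_m -> 'M[R]_n) (A : 'M[R]_(n, m))
   (Lnew eps : R) (x : 'cV[R]_n) (w : 'cV[R]_m) :
  (0 < m)%N -> 0 <= Lnew ->
  (forall x, \sum_i dot (As i *m x) (As i *m x) <= Lnew ^+ 2 * dot x x) ->
  nrm x <= eps ->
  (sigma_min A - Lnew * eps) * nrm w <= nrm (JT As A x w).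
Proof.
move=> hm hL hM hx.
set S := \sum_i w i 0 *: (As i *m x).
have h1 : nrm (A *m w) <= nrm (JT As A x w) + nrm S.
  have := nrm_triangle (JT As A x w) (- S).
  by rewrite nrmN JT_split addrAC subrr add0r.
have h2 : nrm S <= nrm w * (Lnew * nrm x).
  apply: le_trans (sum_CS _ _) _; apply: ler_wpM2l; first exact: nrm_ge0.
  rewrite -(ger0_norm (mulr_ge0 hL (nrm_ge0 x))) -sqrtr_sqr.
  by apply: ler_wsqrtr; rewrite exprMn nrm_sq.
have h3 := nu_bound A w hm.
have h4 : nrm w * (Lnew * nrm x) <= nrm w * (Lnew * eps).
  by apply: ler_wpM2l; [exact: nrm_ge0| exact: ler_wpM2l].
have := nrm_ge0 w; nra.
Qed.

Lemma qv_bound {R : realType} {n m} (As : 'I_m -> 'M[R]_n) (Lnew : R) (d : 'cV[R]_n) :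
  0 <= Lnew ->
  (forall x, \sum_i dot (As i *m x) (As i *m x) <= Lnew ^+ 2 * dot x x) ->
  nrm (qv As d) <= Lnew * dot d d.
Proof.
move=> hL hM; apply: nrm_le_sq; first by rewrite mulr_ge0 ?dot_ge0.
rewrite dotE.
have e i : qv As d i 0 * qv As d i 0 <= dot d d * dot (As i *m d) (As i *m d).
  by rewrite qvE -expr2; apply: CS.
apply: le_trans (ler_sum _ (fun i _ => e i)) _.
rewrite -mulr_sumr; apply: le_trans (ler_wpM2l (dot_ge0 d) (hM d)) _.
rewrite exprMn; have -> : dot d d * (Lnew ^+ 2 * dot d d) = Lnew ^+ 2 * dot d d ^+ 2 by ring.
by [].
Qed.

Lemma conv_dot {R : realType} {k} (x d : 'cV[R]_k) (l : R) :
  dot (x + l *: d) (x + l *: d) =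
  l * dot (x + d) (x + d) + (1 - l) * dot x x - l * (1 - l) * dot d d.
Proof. rewrite !dotDl !dotDr !dotZl !dotZr (dotC d x); ring. Qed.

Lemma conv_main {R : realType} {n m} (As : 'I_m -> 'M[R]_n) (A : 'M[R]_(n, m))
   (Lnew eps l : R) (x1 x2 : 'cV[R]_n) :
  (0 < m)%N -> (forall i, (As i)^T = As i) -> 0 < Lnew ->
  (forall x, \sum_i dot (As i *m x) (As i *m x) <= Lnew ^+ 2 * dot x x) ->
  eps < sigma_min A / (2 * Lnew) -> 0 <= l -> l <= 1 ->
  nrm x1 <= eps -> nrm x2 <= eps ->
  exists2 x, nrm x <= eps &
    quadmap As A x = l *: quadmap As A x1 + (1 - l) *: quadmap As A x2.
Proof.
move=> hm hS hL hM heps l0 l1 hx1 hx2.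
set y := l *: quadmap As A x1 + (1 - l) *: quadmap As A x2.
set d := x1 - x2.
set z := x2 + l *: d.
set s := l * (1 - l).
set D := dot d d.
have s0 : 0 <= s by rewrite mulr_ge0 // subr_ge0.
have D0 : 0 <= D := dot_ge0 d.
have ex1 : x1 = x2 + d by rewrite /d addrC subrK.
have F1 : quadmap As A z - y = (- (s / 2)) *: qv As d.
  rewrite /y /z {1}ex1 !qm_expand // JhZ qvZ.
  apply/matrixP => i j; rewrite !mxE /s; by field.
have F2 : nrm (qv As d) <= Lnew * D := qv_bound As Lnew d (ltW hL) hM.
have F3 : dot z z = l * dot x1 x1 + (1 - l) * dot x2 x2 - s * D.
  by rewrite /z conv_dot -ex1.
have e0 : 0 <= eps by apply: le_trans hx1; exact: nrm_ge0.
have q1 : dot x1 x1 <= eps ^+ 2.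
  by rewrite -nrm_sq; have := nrm_ge0 x1; nra.
have q2 : dot x2 x2 <= eps ^+ 2.
  by rewrite -nrm_sq; have := nrm_ge0 x2; nra.
have Z2 : dot z z <= eps ^+ 2 - s * D by rewrite F3; nra.
have nF : nrm (quadmap As A z - y) <= s / 2 * (Lnew * D).
  rewrite F1 nrmZ normrN ger0_norm ?divr_ge0 //.
  by apply: ler_wpM2l => //; rewrite divr_ge0.
have [sD0|sD0] := leP (s * D) 0.
  exists z.
    by apply: nrm_le_sq => //; apply: le_trans Z2 _; have := mulr_ge0 s0 D0; lra.
  apply/eqP; rewrite -subr_eq0; apply/eqP; apply: nrm_eq0.
  apply/eqP; rewrite eq_le nrm_ge0 andbT; apply: le_trans nF _.
  have : s * D = 0 by have := mulr_ge0 s0 D0; lra.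
  have -> : s / 2 * (Lnew * D) = (s * D) * (Lnew / 2) by field.
  by move=> ->; rewrite mul0r.
have eps0 : 0 < eps.
  rewrite lt_neqAle e0 andbT; apply/eqP => h0.
  have := le_trans (dot_ge0 z) Z2; rewrite -h0 expr0n /=; lra.
set r := eps - nrm z.
have nz2 : nrm z ^+ 2 <= eps ^+ 2 - s * D by rewrite nrm_sq.
have nz0 := nrm_ge0 z.
have r0 : 0 < r by rewrite /r subr_gt0; nra.
have hr : s * D <= 2 * eps * r by rewrite /r; nra.
have hmu : eps * (2 * Lnew) < sigma_min A by rewrite -ltr_pdivlMr // mulr_gt0.
set nu := sigma_min A in hmu.
set mu := nu - Lnew * eps.
set c := (Lnew * eps + mu) / 2.
have Le0 : 0 <= Lnew * eps by rewrite mulr_ge0 // ltW.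
have mu0 : Lnew * eps < mu by rewrite /mu; lra.
have c0 : 0 < c by rewrite /c; lra.
have cmu : c < mu by rewrite /c; lra.
have hz : nrm (quadmap As A z - y) < c * r.
  apply: le_lt_trans nF _.
  have h1 : s / 2 * (Lnew * D) <= Lnew * eps * r.
    have := ltW hL; nra.
  apply: le_lt_trans h1 _; rewrite ltr_pM2r // /c; lra.
have hball x : nrm (x - z) <= r -> nrm x <= eps.
  move=> hx; have := nrm_triangle (x - z) z; rewrite subrK; move: hx; rewrite /r; lra.
have hJ x : nrm (x - z) <= r -> forall w, mu * nrm w <= nrm (JT As A x w).
  move=> hx w; exact: (JT_bound As A Lnew eps x w hm (ltW hL) hM (hball x hx)).
have [x [hx qx]] := graves As A z y r mu c hS c0 cmu hz hJ.
by exists x => //; exact: hball.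
Qed.


Theorem theorem2 (R : realType) (n m : nat) (As : 'I_m -> 'M[R]_n)
  (A : 'M[R]_(n, m)) :
  (0 < n)%N -> (0 < m)%N ->
  (forall i, (As i)^T = As i) ->
  let L := Num.sqrt (\sum_(i < m) spec_norm (As i) ^+ 2) in
  let Lnew := Num.sqrt (lambda_max (\sum_(i < m) (As i)^T *m As i)) in
  let nu := sigma_min A in
  0 < Lnew ->
  Lnew <= L /\
  (forall eps : R, eps < nu / (2 * Lnew) ->
     convex_set (Fset As A eps : set (convex_lmodType 'cV[R]_m))).
Proof.
move=> hn hm hS L Lnew nu hL.
set M := \sum_i (As i)^T *m As i.
have hMs : M^T = M := sumM_sym As.
have hMpsd x : 0 <= dot x (M *m x).
  by rewrite sumM_dot sumr_ge0 // => i _; exact: dot_ge0.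
have [lM0 hMb] := lmax_props M hn hMs hMpsd.
have hL2 : Lnew ^+ 2 = lambda_max M by rewrite /Lnew sqr_sqrtr.
have hM' x : \sum_i dot (As i *m x) (As i *m x) <= Lnew ^+ 2 * dot x x.
  by rewrite hL2 -sumM_dot; exact: hMb.
split.
  rewrite /Lnew /L; apply: ler_wsqrtr.
  have hi i : 0 <= lambda_max ((As i)^T *m As i) /\
     forall x, dot x (((As i)^T *m As i) *m x) <= lambda_max ((As i)^T *m As i) * dot x x.
    apply: lmax_props => //; first exact: gram_sym.
    by move=> x; rewrite gram_dot dot_ge0.
  have -> : \sum_i spec_norm (As i) ^+ 2 = \sum_i lambda_max ((As i)^T *m As i).
    by apply: eq_bigr => i _; rewrite /spec_norm sqr_sqrtr //; case: (hi i).
  have [c [hc [v v0 Mv] _]] := rayleigh_max M hn hMs.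
  rewrite hc.
  have hv := dot_gt0 v v0.
  rewrite -(ler_pM2r hv).
  have -> : c * dot v v = dot v (M *m v) by rewrite Mv dotZr.
  rewrite /M mulmx_suml dot_sumr mulr_suml.
  by apply: ler_sum => i _; case: (hi i) => _; apply.
move=> eps heps p1 p2 l; rewrite !inE /Fset /=.
move=> [x1 h1 <-] [x2 h2 <-]; rewrite enormE in h1; rewrite enormE in h2.
have [x hx qx] := conv_main As A Lnew eps l%:num x1 x2 hm hS hL hM' heps (ge0 l) (le1 l) h1 h2.
by exists x; [rewrite enormE | exact: qx].
Qed.
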